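(* Let $k=\overline{\mathbb Q}$ with the trivial valuation, $G=\operatorname{Spec}k[T]$ the additive group, $G^{\mathrm{an}}=\operatorname{Hom}_k(k[T],\mathbb T)$ with Berkovich's hyperoperation $\odot$, and $H=\{h\in G^{\mathrm{an}}: h(T)<0\}$. Then $H$ is closed under $\odot$, $(H,\odot)$ is a hypergroup, and the map $H\to\mathbb T_{<0}$, $h\mapsto h(T)$, is an isomorphism of hypergroups onto $\mathbb T_{<0}=\{a\in\mathbb T: a<0\}$ with the hyperaddition of $\mathbb T$ (i.e. a bijection $\phi$ with $\phi(f\odot g)=\phi(f)\oplus\phi(g)$).
   Context: $\mathbb T=\mathbb R\cup\{-\infty\}$ is the tropical hyperfield: multiplication is usual addition with $-\infty$ absorbing, hyperaddition $s\oplus t=\max\{s,t\}$ if $s\ne t$, $s\oplus s=\{u\in\mathbb T:u\le s\}$; $\mathbb T_{<0}$ (which contains $-\infty$) is closed under $\oplus$. $\operatorname{Hom}_k(B,\mathbb T)$ is the set of maps $\varphi:B\to\mathbb T$ with $\varphi(0)=-\infty$, $\varphi(1)=0$, $\varphi(xy)=\varphi(x)+\varphi(y)$, $\varphi(x+y)\in\varphi(x)\oplus\varphi(y)$, restricting to the trivial valuation on $k$ (nonzero elements $\mapsto0$). The Hopf algebra $A=k[T]$ has coproduct $\Delta(T)=T\otimes1+1\otimes T$; with $j_1(a)=a\otimes1$, $j_2(a)=1\otimes a$, $g\odot h=\{f\in\operatorname{Hom}_k(A,\mathbb T):\exists\beta\in\operatorname{Hom}_k(A\otimes_kA,\mathbb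 T),\ \beta\circ j_1=g,\ \beta\circ j_2=h,\ f=\beta\circ\Delta\}$. A hypergroup is a set with an associative hyperoperation $*$ having a unique identity $e$ ($e*x=x*e=\{x\}$), unique inverses ($e\in x*x^{-1}\cap x^{-1}*x$), and reversibility ($x\in y*z\Rightarrow y\in x*z^{-1},\ z\in y^{-1}*x$). *)

(* Defs.v *)
From Stdlib Require Import Reals.
From HB Require Import structures.
From mathcomp Require Import all_boot all_order all_algebra all_field.
Set Implicit Arguments. Unset Strict Implicit. Unset Printing Implicit Defensive.
Import GRing.Theory.
Local Open Scope ring_scope.

(* ---------- The tropical hyperfield T = R ∪ {-oo}; None = -oo ---------- *)
Definition Trop := option R.

Definition tle (s t : Trop) : Prop :=
  match s, t with
  | None, _ => True
  | Some _, None => False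
  | Some a, Some b => Rle a b
  end.

Definition tlt (s t : Trop) : Prop := tle s t /\ s <> t.

Definition tmul (s t : Trop) : Trop :=
  match s, t with
  | Some a, Some b => Some (Rplus a b)
  | _, _ => None
  end.

(* hyperaddition: thadd s t u  <->  u \in s (+) t *)
Definition thadd (s t : Trop) (u : Trop) : Prop :=
  (s = t /\ tle u s) \/
  (s <> t /\ ((tlt s t /\ u = t) \/ (tlt t s /\ u = s))).

Definition Tneg (a : Trop) : Prop := tlt a (Some R0).

(* ---------- Hom_k(B, T) for a commutative k-algebra B ----------
   emb : k -> B is the structure map of the k-algebra B. *)
Definition is_trop_hom (B : comNzRingType) (emb : algC -> B) (phi : B -> Trop)
  : Prop :=
  [/\ phi 0 = None,
      phi 1 = Some R0,
      (forall x y, phi (x * y) = tmul (phi x) (phi y)),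
      (forall x y, thadd (phi x) (phi y) (phi (x + y))) &
      (forall c : algC, c != 0 -> phi (emb c) = Some R0)].

(* A = k[T] = {poly algC};  A ⊗_k A = k[T1,T2] modelled as {poly {poly algC}}
   with the outer variable for the first factor and inner for the second. *)
Definition embA (c : algC) : {poly algC} := c%:P.
Definition embAA (c : algC) : {poly {poly algC}} := c%:P%:P.
Definition j1 (p : {poly algC}) : {poly {poly algC}} := map_poly polyC p.
Definition j2 (p : {poly algC}) : {poly {poly algC}} := p%:P.
(* coproduct: Delta(T) = T ⊗ 1 + 1 ⊗ T, extended as a k-algebra map *)
Definition Delta (p : {poly algC}) : {poly {poly algC}} :=
  (map_poly embAA p).[j1 'X + j2 'X].

Definition Gan (f : {poly algC} -> Trop) : Prop := is_trop_hom embA f.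

(* Berkovich hyperoperation: odot g h f  <->  f \in g ⊙ h *)
Definition odot (g h f : {poly algC} -> Trop) : Prop :=
  Gan f /\
  exists beta : {poly {poly algC}} -> Trop,
    [/\ is_trop_hom embAA beta,
        (forall p, beta (j1 p) = g p),
        (forall p, beta (j2 p) = h p) &
        (forall p, f p = beta (Delta p))].

Definition Hsub (h : {poly algC} -> Trop) : Prop := Gan h /\ tlt (h 'X) (Some R0).

(* ---------- Hypergroups (carrier given as a subset S of a type X) ----------
   op x y z  <->  z \in x * y *)
Section Hypergroup.
Variables (X : Type) (S : X -> Prop) (op : X -> X -> X -> Prop).

Definition hclosed : Prop := forall x y z, S x -> S y -> op x y z -> S z.

Definition hassoc : Prop :=
  forall x y z, S x -> S y -> S z ->
    forall w, (exists u, op x y u /\ op u z w) <-> (exists v, op y z v /\ op x v w).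

Definition hidentity (e : X) : Prop :=
  S e /\ forall x, S x ->
    (forall w, op e x w <-> w = x) /\ (forall w, op x e w <-> w = x).

Definition hinverse (e x y : X) : Prop := S y /\ op x y e /\ op y x e.

Definition is_hypergroup : Prop :=
  hclosed /\ hassoc /\
  exists e, hidentity e /\
    (forall e', hidentity e' -> e' = e) /\
    (forall x, S x -> exists y, hinverse e x y /\
        forall y', hinverse e x y' -> y' = y) /\
    (forall x y z y' z', S x -> S y -> S z ->
        hinverse e y y' -> hinverse e z z' ->
        op y z x -> op x z' y /\ op y' x z).
End Hypergroup.

(* Main.v *)
Require Import Defs.
From Stdlib Require Import Reals.
From mathcomp Require Import all_boot all_order all_algebra all_field.
Local Open Scope ring_scope.
From Stdlib Require Import Lra FunctionalExtensionality.
From mathcomp Require Import ring.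
Require Import Defs.
Set Implicit Arguments. Unset Strict Implicit.
Import GRing.Theory.

Local Open Scope R_scope.
Definition E (x : Trop) : R := match x with None => 0 | Some r => exp r end.

Lemma E_ge0 x : 0 <= E x.
Proof. case: x => [r|] /=; [left; apply: exp_pos | lra]. Qed.

Lemma E_None x : E x = 0 -> x = None.
Proof. case: x => [r|] //= H. have := exp_pos r. lra. Qed.

Lemma E_inj x y : E x = E y -> x = y.
Proof.
case: x => [a|]; case: y => [b|] //= H.
- by rewrite (exp_inv _ _ H).
- have := exp_pos a; lra.
- have := exp_pos b; lra.
Qed.

Lemma tle_E x y : tle x y <-> E x <= E y.
Proof.
case: x => [a|]; case: y => [b|] /=; split => //; try lra.
- move=> [H|H]; [left; exact: exp_increasing | rewrite H; lra].
- move=> [H|H]; [left; exact: exp_lt_inv | right; exact: exp_inv].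
- have := exp_pos a; lra.
- move=> _; have := exp_pos b; lra.
Qed.

Lemma tlt_E x y : tlt x y <-> E x < E y.
Proof.
rewrite /tlt tle_E; split.
- move=> [H1 H2]; case: H1 => // H; case: H2; exact: E_inj.
- move=> H; split; [lra| move=> Hxy; rewrite Hxy in H; lra].
Qed.

Lemma E_mul x y : E (tmul x y) = E x * E y.
Proof. case: x => [a|]; case: y => [b|] /=; rewrite ?exp_plus; lra. Qed.

Definition M2 a b c := (a = b /\ c <= a) \/ (a = c /\ b <= a) \/ (b = c /\ a <= b).

Lemma thadd_E x y z : thadd x y z <-> M2 (E x) (E y) (E z).
Proof.
rewrite /thadd /M2 !tlt_E !tle_E; split.
- move=> [[-> H]|[Hne [[H1 ->]|[H1 ->]]]]; lra.
- have Hi : forall a b, a <> b -> E a <> E b by move=> a b H1 H2; apply: H1; exact: E_inj.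
  move=> [[H1 H2]|[[H1 H2]|[H1 H2]]].
  + left; split; [exact: E_inj| lra].
  + case: (Req_dec (E x) (E y)) => Hxy.
    * left; split; [exact: E_inj| lra].
    * right; split; [move=> H; apply: Hxy; rewrite H //|]. right; split; [lra| exact: E_inj].
  + case: (Req_dec (E x) (E y)) => Hxy.
    * left; split; [exact: E_inj| lra].
    * right; split; [move=> H; apply: Hxy; rewrite H //|]. left; split; [lra| exact: E_inj].
Qed.

Definition tmax (x y : Trop) : Trop := if Rle_dec (E x) (E y) then y else x.
Lemma E_max x y : E (tmax x y) = Rmax (E x) (E y).
Proof. by rewrite /tmax /Rmax; case: Rle_dec. Qed.

Lemma E_Some0 : E (Some 0) = 1. Proof. by rewrite /= exp_0. Qed.
Local Close Scope R_scope.
Delimit Scope R_scope with Re.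

Lemma tmul_None_r x : tmul x None = None. Proof. by case: x. Qed.

Lemma M2_le a b c : M2 a b c -> (c <= Rmax a b)%Re.
Proof. rewrite /M2 => H; have := Rmax_l a b; have := Rmax_r a b; lra. Qed.

Lemma M2_scale k a b c : (0 <= k)%Re -> M2 a b c -> M2 (k*a) (k*b) (k*c).
Proof.
move=> Hk [[-> H]|[[-> H]|[-> H]]].
- by left; split => //; apply: Rmult_le_compat_l.
- by right; left; split => //; apply: Rmult_le_compat_l.
- by right; right; split => //; apply: Rmult_le_compat_l.
Qed.

Lemma M2_max a b c a' b' c' : M2 a b c -> M2 a' b' c' -> M2 (Rmax a a') (Rmax b b') (Rmax c c').
Proof.
rewrite /M2 /Rmax => H1 H2.
case: Rle_dec => ?; case: Rle_dec => ?; case: Rle_dec => ?;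
(case: H1 => [[? ?]|[[? ?]|[? ?]]]; case: H2 => [[? ?]|[[? ?]|[? ?]]]);
first [left; split; lra | right; left; split; lra | right; right; split; lra | lra].
Qed.

Lemma M2_strict A B C K : (0 <= K)%Re -> (B < A)%Re -> (0 <= C)%Re -> M2 (A*K) (B*K) C -> C = (A*K)%Re.
Proof.
move=> HK HBA HC HM.
case: (Req_dec K 0) => HK0.
- subst K; rewrite !Rmult_0_r in HM *; case: HM => [[? ?]|[[? ?]|[? ?]]]; lra.
- have HK' : (0 < K)%Re by lra.
  have := Rmult_lt_compat_r K B A HK' HBA.
  case: HM => [[? ?]|[[? ?]|[? ?]]]; lra.
Qed.

Lemma thadd_shift c x y z : thadd x y z -> thadd (tmul c x) (tmul c y) (tmul c z).
Proof. rewrite !thadd_E !E_mul; apply: M2_scale; exact: E_ge0. Qed.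

Lemma thadd_max x y z x' y' z' : thadd x y z -> thadd x' y' z' ->
  thadd (tmax x x') (tmax y y') (tmax z z').
Proof. rewrite !thadd_E !E_max; exact: M2_max. Qed.

Definition tropH {K : comNzRingType} (nu : K -> Trop) : Prop :=
  [/\ nu 0 = None, nu 1 = Some R0,
      (forall x y, nu (x * y) = tmul (nu x) (nu y)) &
      (forall x y, thadd (nu x) (nu y) (nu (x + y)))].

Definition gl {K : comNzRingType} (nu : K -> Trop) (w : R) (s : seq K) : Trop :=
  foldr (fun c acc => tmax (nu c) (tmul (Some w) acc)) None s.
Definition Gs {K : comNzRingType} (nu : K -> Trop) (w : R) (P : {poly K}) : Trop :=
  gl nu w (polyseq P).

Section Gauss.
Variables (K : comNzRingType) (nu : K -> Trop) (w : R).
Hypothesis Hnu : tropH nu.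
Local Notation G := (Gs nu w).

Lemma G0 : G 0 = None. Proof. by rewrite /Gs polyseq0. Qed.

Lemma Gcons P c : G (P * 'X + c%:P) = tmax (nu c) (tmul (Some w) (G P)).
Proof.
case: Hnu => nu0 _ _ _.
rewrite -cons_poly_def /Gs polyseq_cons.
case HP: (nilp P) => //=.
move/nilP: HP => ->; rewrite polyseqC /=.
case: (c == 0) /eqP => [->|_] /=.
- apply: E_inj; rewrite E_max nu0 /= Rmax_left //; lra.
- done.
Qed.

Lemma GC c : G c%:P = nu c.
Proof.
rewrite -[c%:P]add0r -(mul0r 'X) Gcons G0 tmul_None_r.
apply: E_inj; rewrite E_max /= Rmax_left //; exact: E_ge0.
Qed.

Lemma G1 : G 1 = Some R0.
Proof. case: Hnu => _ nu1 _ _. by rewrite -polyC1 GC. Qed.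

Lemma GX : G 'X = Some w.
Proof.
case: Hnu => nu0 _ _ _.
rewrite -['X]mul1r -[1 * 'X]addr0 -polyC0 Gcons G1 nu0.
apply: E_inj; rewrite E_max E_mul /= exp_0 Rmult_1_r Rmax_right //.
left; exact: exp_pos.
Qed.

Lemma GXmul P : G (P * 'X) = tmul (Some w) (G P).
Proof.
case: Hnu => nu0 _ _ _.
rewrite -[P * 'X]addr0 -polyC0 Gcons nu0.
apply: E_inj; rewrite E_max /= Rmax_right //; exact: E_ge0.
Qed.

Lemma Gadd (P Q : {poly K}) : thadd (G P) (G Q) (G (P + Q)).
Proof.
case: Hnu => nu0 _ _ nuD.
elim/poly_ind: P Q => [|P a IH] Q.
  rewrite add0r G0 thadd_E /= /M2; right; right; split => //; exact: E_ge0.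
elim/poly_ind: Q => [|Q b _].
  rewrite addr0 G0 thadd_E /= /M2; right; left; split => //; exact: E_ge0.
have -> : P * 'X + a%:P + (Q * 'X + b%:P) = (P + Q) * 'X + (a + b)%:P.
  by rewrite polyCD; ring.
rewrite !Gcons; apply: thadd_max => //; exact: thadd_shift.
Qed.

Lemma GscaleC c P : G (c%:P * P) = tmul (nu c) (G P).
Proof.
case: Hnu => nu0 _ nuM _.
elim/poly_ind: P => [|P d IH]; first by rewrite mulr0 G0 tmul_None_r.
have -> : c%:P * (P * 'X + d%:P) = (c%:P * P) * 'X + (c * d)%:P.
  by rewrite polyCM; ring.
rewrite !Gcons IH nuM.
apply: E_inj; rewrite !(E_max, E_mul) /=.
rewrite -RmaxRmult; last exact: E_ge0.
congr Rmax; rewrite -!Rmult_assoc (Rmult_comm (exp w)) //.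
Qed.

Lemma Gcoef0 (P : {poly K}) : (E (nu P`_0) <= E (G P))%Re.
Proof.
case: Hnu => nu0 _ _ _.
elim/poly_ind: P => [|P a _]; first by rewrite coef0 nu0 G0 /=; lra.
rewrite coefD coefMX coefC /= add0r Gcons E_max; exact: Rmax_l.
Qed.

Lemma Gle_mul (P Q : {poly K}) : (E (G (P * Q)) <= E (G P) * E (G Q))%Re.
Proof.
elim/poly_ind: P => [|P a IH]; first by rewrite mul0r G0 /=; lra.
have -> : (P * 'X + a%:P) * Q = (P * Q) * 'X + a%:P * Q by ring.
have H := Gadd ((P * Q) * 'X) (a%:P * Q).
rewrite thadd_E GXmul GscaleC !E_mul in H.
apply: (Rle_trans _ _ _ (M2_le H)).
rewrite Gcons E_max E_mul /=.
have M1 := Rmax_l (E (nu a)) (exp w * E (G P)).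
have M3 := Rmax_r (E (nu a)) (exp w * E (G P)).
have := exp_pos w; have := E_ge0 (G Q); have := E_ge0 (nu a).
move=> h1 h2 h3.
apply: Rmax_lub; nra.
Qed.

Lemma Gmul (P Q : {poly K}) : G (P * Q) = tmul (G P) (G Q).
Proof.
case: Hnu => nu0 _ nuM _.
elim/poly_ind: P Q => [|P a IHP] Q; first by rewrite mul0r G0.
case: (Rlt_le_dec (E (nu a)) (exp w * E (G P))) => Ha.
  have -> : (P * 'X + a%:P) * Q = (P * Q) * 'X + a%:P * Q by ring.
  have H := Gadd ((P * Q) * 'X) (a%:P * Q).
  rewrite thadd_E GXmul GscaleC IHP !E_mul /= -Rmult_assoc in H.
  apply: E_inj; rewrite E_mul Gcons E_max E_mul /= Rmax_right; last lra.
  apply: M2_strict H => //; exact: E_ge0.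
elim/poly_ind: Q => [|Q b IHQ]; first by rewrite mulr0 G0 tmul_None_r.
set P0 := P * 'X + a%:P.
case: (Rlt_le_dec (E (nu b)) (exp w * E (G Q))) => Hb.
  have -> : P0 * (Q * 'X + b%:P) = (P0 * Q) * 'X + b%:P * P0 by ring.
  have H := Gadd ((P0 * Q) * 'X) (b%:P * P0).
  rewrite thadd_E GXmul GscaleC IHQ !E_mul /= in H.
  rewrite (Rmult_comm (E (G P0)) (E (G Q))) -Rmult_assoc in H.
  apply: E_inj; rewrite E_mul [G (Q * 'X + b%:P)]Gcons E_max E_mul /= Rmax_right; last lra.
  rewrite Rmult_comm; apply: M2_strict H => //; exact: E_ge0.
have HP0 : E (G P0) = E (nu a) by rewrite /P0 Gcons E_max E_mul Rmax_left.
have HQ0 : E (G (Q * 'X + b%:P)) = E (nu b) by rewrite Gcons E_max E_mul Rmax_left.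
apply: E_inj; rewrite E_mul HP0 HQ0.
have H1 := Gle_mul P0 (Q * 'X + b%:P). rewrite HP0 HQ0 in H1.
have H2 := Gcoef0 (P0 * (Q * 'X + b%:P)).
rewrite coef0M /P0 !coefD !coefMX !coefC /= !add0r nuM E_mul in H2.
fold P0 in H2. lra.
Qed.

Lemma G_tropH : tropH G.
Proof.
split; [exact: G0 | exact: G1 | exact: Gmul | exact: Gadd].
Qed.
End Gauss.

Definition triv (c : algC) : Trop := if c == 0 then None else Some R0.

Lemma triv_tropH : tropH triv.
Proof.
split.
- by rewrite /triv eqxx.
- by rewrite /triv oner_eq0.
- move=> x y; rewrite /triv mulf_eq0.
  case: (x == 0) => //=; case: (y == 0) => //=. by rewrite Rplus_0_r.
- move=> x y; rewrite thadd_E.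
  case: (x =P 0) => [->|Hx]; first by rewrite add0r /M2; right; right; split => //; rewrite /triv eqxx /=; exact: E_ge0.
  case: (y =P 0) => [->|Hy]; first by rewrite addr0 /M2; right; left; split => //; rewrite /triv eqxx /=; exact: E_ge0.
  have Ex : triv x = Some R0 by rewrite /triv; have /negPf -> : x != 0 by apply/eqP.
  have Ey : triv y = Some R0 by rewrite /triv; have /negPf -> : y != 0 by apply/eqP.
  rewrite Ex Ey /M2; left; split => //; rewrite E_Some0 /triv; case: (x + y == 0) => /=; rewrite ?exp_0; lra.
Qed.

Lemma tropH_hom (K : comNzRingType) (emb : algC -> K) (nu : K -> Trop) :
  tropH nu -> (forall c, c != 0 -> nu (emb c) = Some R0) -> is_trop_hom emb nu.
Proof. by case=> *; split. Qed.

Lemma hom_tropH (K : comNzRingType) (emb : algC -> K) (nu : K -> Trop) :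
  is_trop_hom emb nu -> tropH nu.
Proof. by case=> *; split. Qed.

Lemma comp_hom (B B' : comNzRingType) (emb : algC -> B) (emb' : algC -> B')
  (psi : B -> B') (phi : B' -> Trop) :
  is_trop_hom emb' phi -> psi 0 = 0 -> psi 1 = 1 ->
  {morph psi : x y / x + y} -> {morph psi : x y / x * y} ->
  (forall c, psi (emb c) = emb' c) -> is_trop_hom emb (fun x => phi (psi x)).
Proof.
case=> h0 h1 hM hD hE p0 p1 pD pM pE; split.
- by rewrite p0.
- by rewrite p1.
- by move=> x y; rewrite pM.
- by move=> x y; rewrite pD.
- by move=> c Hc; rewrite pE hE.
Qed.

Lemma tropH_N (K : comNzRingType) (nu : K -> Trop) : tropH nu -> forall x, nu (- x) = nu x.
Proof.
case=> h0 h1 hM _ x.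
have H1 : nu (-1) = Some R0.
  have := hM (-1) (-1); rewrite mulrNN mulr1 h1 => H.
  apply: E_inj; have := f_equal E H; rewrite E_mul E_Some0 => HE.
  have := E_ge0 (nu (-1)); nra.
by rewrite -mulN1r hM H1; case: (nu x) => //= r; rewrite Rplus_0_l.
Qed.

Definition sub2 (A B : {poly {poly algC}}) (P : {poly {poly algC}}) : {poly {poly algC}} :=
  (horner_eval A \o map_poly (horner_eval B \o map_poly (polyC \o @polyC algC))) P.

Lemma sub2_0 A B : sub2 A B 0 = 0. Proof. exact: rmorph0. Qed.
Lemma sub2_1 A B : sub2 A B 1 = 1. Proof. exact: rmorph1. Qed.
Lemma sub2_D A B : {morph sub2 A B : x y / x + y}. Proof. move=> x y; exact: rmorphD. Qed.
Lemma sub2_M A B : {morph sub2 A B : x y / x * y}. Proof. move=> x y; exact: rmorphM. Qed.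
Lemma sub2_C A B c : sub2 A B (embAA c) = embAA c.
Proof. by rewrite /sub2 /embAA /= map_polyC /= map_polyC /= /horner_eval !hornerC. Qed.
Lemma sub2_X A B : sub2 A B 'X = A.
Proof. by rewrite /sub2 /= map_polyX /horner_eval hornerX. Qed.
Lemma sub2_XC A B : sub2 A B ('X%:P) = B.
Proof. by rewrite /sub2 /= map_polyC /= map_polyX /horner_eval hornerX hornerC. Qed.

Lemma DeltaE p : Delta p = (horner_eval (j1 'X + j2 'X) \o map_poly (polyC \o @polyC algC)) p.
Proof. by []. Qed.

Lemma Delta_hom (beta : {poly {poly algC}} -> Trop) : is_trop_hom embAA beta ->
  Gan (fun p => beta (Delta p)).
Proof.
move=> Hb; apply: (comp_hom Hb).
- by rewrite DeltaE rmorph0.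
- by rewrite DeltaE rmorph1.
- by move=> x y; rewrite !DeltaE rmorphD.
- by move=> x y; rewrite !DeltaE rmorphM.
- by move=> c; rewrite DeltaE /= /embA map_polyC /horner_eval hornerC.
Qed.

Lemma DeltaX : Delta 'X = j1 'X + j2 'X.
Proof. by rewrite DeltaE /= map_polyX /horner_eval hornerX. Qed.

Lemma j1_hom (beta : {poly {poly algC}} -> Trop) : is_trop_hom embAA beta ->
  Gan (fun p => beta (j1 p)).
Proof.
move=> Hb; apply: (comp_hom Hb); rewrite /j1.
- by rewrite rmorph0.
- by rewrite rmorph1.
- by move=> x y; rewrite rmorphD.
- by move=> x y; rewrite rmorphM.
- by move=> c; rewrite /embA map_polyC.
Qed.

Lemma j2_hom (beta : {poly {poly algC}} -> Trop) : is_trop_hom embAA beta ->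
  Gan (fun p => beta (j2 p)).
Proof.
move=> Hb; apply: (comp_hom Hb); rewrite /j2.
- by rewrite rmorph0.
- by rewrite rmorph1.
- by move=> x y; rewrite rmorphD.
- by move=> x y; rewrite rmorphM.
- by [].
Qed.

Lemma j1X : j1 'X = 'X. Proof. by rewrite /j1 map_polyX. Qed.

Definition nuv (v : R) : {poly algC} -> Trop := Gs triv v.
Definition mono (u v : R) : {poly {poly algC}} -> Trop := Gs (nuv v) u.

Lemma nuv_tropH v : tropH (nuv v).
Proof. exact: (G_tropH v triv_tropH). Qed.

Lemma nuv_Gan v : Gan (nuv v).
Proof.
apply: tropH_hom; first exact: nuv_tropH.
move=> c Hc; rewrite /embA /nuv GC; last exact: triv_tropH.
by rewrite /triv (negPf Hc).
Qed.

Lemma nuvX v : nuv v 'X = Some v.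
Proof. exact: (GX v triv_tropH). Qed.

Lemma mono_tropH u v : tropH (mono u v).
Proof. exact: (G_tropH u (nuv_tropH v)). Qed.

Lemma mono_hom u v : is_trop_hom embAA (mono u v).
Proof.
apply: tropH_hom; first exact: mono_tropH.
move=> c Hc; rewrite /embAA /mono GC; last exact: nuv_tropH.
rewrite /nuv GC; last exact: triv_tropH.
by rewrite /triv (negPf Hc).
Qed.

Lemma monoX u v : mono u v 'X = Some u.
Proof. exact: (GX u (nuv_tropH v)). Qed.

Lemma monoXC u v : mono u v ('X%:P) = Some v.
Proof. rewrite /mono GC; [exact: nuvX | exact: nuv_tropH]. Qed.

Lemma beta_hom u v A B : is_trop_hom embAA (fun P => mono u v (sub2 A B P)).
Proof.
apply: (comp_hom (mono_hom u v)).
- exact: sub2_0.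
- exact: sub2_1.
- exact: sub2_D.
- exact: sub2_M.
- exact: sub2_C.
Qed.

Lemma uniq_aux M e C : (0 <= M < 1)%Re -> (0 <= C)%Re -> M2 M e C ->
  (e = 0%Re -> C = M) /\ (e = 1%Re -> C = 1%Re).
Proof. move=> HM HC H; split=> He; subst e; case: H => [[? ?]|[[? ?]|[? ?]]]; lra. Qed.

Lemma uniq_hom (f g : {poly algC} -> Trop) : Gan f -> Gan g -> f 'X = g 'X ->
  tlt (f 'X) (Some R0) -> f = g.
Proof.
case=> f0 f1 fM fD fE [g0 g1 gM gD gE] HX.
rewrite tlt_E E_Some0 => Hlt.
suff H : forall p, f p = g p /\ (E (f p) <= 1)%Re.
  by apply: functional_extensionality => p; case: (H p).
elim/poly_ind => [|p c [IH1 IH2]]; first by rewrite f0 g0 /=; split => //; lra.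
have Hf := fD (p * 'X) c%:P. have Hg := gD (p * 'X) c%:P.
rewrite thadd_E fM E_mul in Hf. rewrite thadd_E gM E_mul -IH1 -HX in Hg.
set M := (E (f p) * E (f 'X))%Re in Hf Hg.
have HM : (0 <= M < 1)%Re.
  rewrite /M; have := E_ge0 (f p); have := E_ge0 (f 'X); nra.
have Hc : (E (f c%:P) = 0 /\ E (g c%:P) = 0 \/ E (f c%:P) = 1 /\ E (g c%:P) = 1)%Re.
  case: (c =P 0) => [->|/eqP Hc0]; first by left; rewrite polyC0 f0 g0.
  by right; have := fE c Hc0; have := gE c Hc0; rewrite /embA => -> ->; rewrite E_Some0.
have A1 := uniq_aux HM (E_ge0 _) Hf. have A2 := uniq_aux HM (E_ge0 _) Hg.
case: Hc => [[e1 e2]|[e1 e2]].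
- have Hfe := (proj1 A1) e1. have Hge := (proj1 A2) e2.
  split; [apply: E_inj; by rewrite Hfe Hge | rewrite Hfe; lra].
- have Hfe := (proj2 A1) e1. have Hge := (proj2 A2) e2.
  split; [apply: E_inj; by rewrite Hfe Hge | rewrite Hfe; lra].
Qed.

Lemma thadd_ne_uniq s t a b : thadd s t a -> thadd s t b -> s <> t -> a = b.
Proof.
rewrite !thadd_E => H1 H2 Hne.
have Hne' : E s <> E t by move=> H; apply: Hne; exact: E_inj.
apply: E_inj.
case: H1 => [[? ?]|[[? ?]|[? ?]]]; case: H2 => [[? ?]|[[? ?]|[? ?]]]; lra.
Qed.

Lemma thadd_lt s t a : thadd s t a -> (E s < E t)%Re -> a = t.
Proof.
rewrite thadd_E => H1 Hlt; apply: E_inj.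
case: H1 => [[? ?]|[[? ?]|[? ?]]]; lra.
Qed.

Lemma thadd_same s a : thadd s s a -> tle a s.
Proof. by case=> [[_ H]|[H _]]. Qed.

Lemma Hsub_lt1 h : Hsub h -> (E (h 'X) < 1)%Re.
Proof. by case=> _; rewrite tlt_E E_Some0. Qed.

Lemma realize f g (beta : {poly {poly algC}} -> Trop) : Hsub f -> Hsub g ->
  is_trop_hom embAA beta -> beta (j1 'X) = f 'X -> beta (j2 'X) = g 'X ->
  odot f g (fun p => beta (Delta p)).
Proof.
move=> [Gf Tf] [Gg Tg] Hb H1 H2; split; first exact: Delta_hom.
exists beta; split => //.
- have E1 := uniq_hom (j1_hom Hb) Gf H1 (ltac:(by rewrite /= H1)).
  by move=> p; rewrite -E1.
- have E2 := uniq_hom (j2_hom Hb) Gg H2 (ltac:(by rewrite /= H2)).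
  by move=> p; rewrite -E2.
Qed.

Lemma odot_fwd f g w : Hsub f -> Hsub g -> odot f g w ->
  Hsub w /\ thadd (f 'X) (g 'X) (w 'X).
Proof.
move=> Hf Hg [Gw [beta [Hb H1 H2 H3]]].
have Hw : thadd (f 'X) (g 'X) (w 'X).
  rewrite H3 DeltaX -H1 -H2; case: Hb => _ _ _ hD _; exact: hD.
split => //; split => //.
rewrite tlt_E E_Some0; move: Hw; rewrite thadd_E => /M2_le Hle.
have := Hsub_lt1 Hf; have := Hsub_lt1 Hg => h1 h2.
have := Rmax_lub_lt _ _ _ h2 h1; lra.
Qed.

Lemma bwd_gen f g a u v A B : Hsub f -> Hsub g ->
  mono u v A = f 'X -> mono u v B = g 'X -> mono u v (A + B) = a ->
  exists w, odot f g w /\ w 'X = a.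
Proof.
move=> Hf Hg HA HB HAB.
have Hb := beta_hom u v A B.
exists (fun p => mono u v (sub2 A B (Delta p))); split.
- apply: (@realize f g (fun P => mono u v (sub2 A B P))) => //; by rewrite ?j1X ?sub2_X ?sub2_XC.
- by rewrite DeltaX sub2_D j1X sub2_X sub2_XC.
Qed.

Lemma mono0 u v : mono u v 0 = None.
Proof. by case: (mono_tropH u v). Qed.

Lemma odot_bwd f g a : Hsub f -> Hsub g -> thadd (f 'X) (g 'X) a ->
  exists w, odot f g w /\ w 'X = a.
Proof.
move=> Hf Hg Ha.
have dist : forall u v A B, mono u v A = f 'X -> mono u v B = g 'X -> f 'X <> g 'X ->
    exists w, odot f g w /\ w 'X = a.
  move=> u v A B HA HB Hne; apply: (bwd_gen Hf Hg HA HB).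
  apply: (thadd_ne_uniq _ Ha Hne).
  rewrite -HA -HB; by case: (mono_tropH u v).
case Ef : (f 'X) => [x|]; case Eg : (g 'X) => [y|]; rewrite Ef Eg in Ha.
- case: (Req_dec x y) => Hxy; last first.
    apply: (dist x y 'X ('X%:P)); rewrite ?monoX ?monoXC ?Ef ?Eg //.
    by move=> [].
  subst y.
  have Hle := thadd_same Ha.
  clear dist; case: a Ha Hle => [z|] Ha Hle.
  + rewrite /= in Hle. case: Hle => Hzx.
    * apply: (bwd_gen (u := z) (v := x) (A := 'X - 'X%:P) (B := 'X%:P) Hf Hg).
      -- rewrite Ef. case: (mono_tropH z x) => _ _ _ hD. have := hD 'X (- 'X%:P).
         rewrite tropH_N; last exact: mono_tropH.
         rewrite monoX monoXC => H; apply: (thadd_lt H).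
         by rewrite /=; apply: exp_increasing.
      -- by rewrite Eg monoXC.
      -- by rewrite subrK monoX.
    * subst z. apply: (bwd_gen (u := x) (v := x) (A := 'X) (B := 'X%:P) Hf Hg).
      -- by rewrite Ef monoX.
      -- by rewrite Eg monoXC.
      -- rewrite -['X]mul1r /mono Gcons; last exact: nuv_tropH.
         rewrite nuvX G1; last exact: nuv_tropH.
         apply: E_inj; rewrite E_max /= Rplus_0_r Rmax_left //; lra.
  + apply: (bwd_gen (u := x) (v := x) (A := 'X) (B := - 'X) Hf Hg).
    * by rewrite Ef monoX.
    * by rewrite Eg tropH_N ?monoX //; exact: mono_tropH.
    * by rewrite addrN mono0.
- apply: (dist x x 'X 0); rewrite ?monoX ?mono0 ?Ef ?Eg //.
- apply: (dist y y 0 ('X%:P)); rewrite ?monoXC ?mono0 ?Ef ?Eg //.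
- have -> : a = None.
    apply: E_None; move: Ha; rewrite thadd_E /= /M2 => H.
    have := E_ge0 a; case: H => [[? ?]|[[? ?]|[? ?]]]; lra.
  apply: (bwd_gen (u := -1) (v := -1) (A := 0) (B := 0) Hf Hg); by rewrite ?addr0 ?mono0.
Qed.

Lemma Hsub_inj f g : Hsub f -> Hsub g -> f 'X = g 'X -> f = g.
Proof. move=> [Gf Tf] [Gg _] H; exact: uniq_hom. Qed.

Lemma odot_char f g w : Hsub f -> Hsub g ->
  (odot f g w <-> Hsub w /\ thadd (f 'X) (g 'X) (w 'X)).
Proof.
move=> Hf Hg; split; first exact: odot_fwd.
move=> [Hw Ht].
have [w' [Ho Hx]] := odot_bwd Hf Hg Ht.
have [Hw' _] := odot_fwd Hf Hg Ho.
by rewrite -(Hsub_inj Hw' Hw Hx).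
Qed.

Lemma surj a : Tneg a -> exists h, Hsub h /\ h 'X = a.
Proof.
case: a => [x|] Ha.
- exists (nuv x); rewrite nuvX; split => //; split => //; [exact: nuv_Gan | by rewrite nuvX].
- pose beta := fun P => mono (-1) (-1) (sub2 0 0 P).
  exists (fun p => beta (j1 p)).
  have Hx : beta (j1 'X) = None by rewrite /beta j1X sub2_X mono0.
  split => //; split; [exact: (j1_hom (beta_hom _ _ _ _)) | by rewrite Hx].
Qed.

Lemma M2_12 a b c : M2 a b c -> M2 b a c.
Proof. rewrite /M2; move=> [[? ?]|[[? ?]|[? ?]]]; [left|right;right|right;left]; split; lra. Qed.
Lemma M2_23 a b c : M2 a b c -> M2 a c b.
Proof. rewrite /M2; move=> [[? ?]|[[? ?]|[? ?]]]; [right;left|left|right;right]; split; lra. Qed.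

Ltac m2g := match goal with |- M2 ?x ?y ?z =>
  rewrite /M2; case: (total_order_T x y) => [[?|?]|?];
  [right; right; split; lra | left; split; lra | right; left; split; lra] end.

Lemma assoc_R a b c d u : M2 a b u -> M2 u c d ->
  exists v, (v = a \/ v = b \/ v = c \/ v = d) /\ M2 b c v /\ M2 a v d.
Proof.
move=> H1 H2.
case: (total_order_T b c) => [[Hbc|Hbc]|Hbc].
- exists c; split; first tauto.
  split; case: H1 => [[? ?]|[[? ?]|[? ?]]]; case: H2 => [[? ?]|[[? ?]|[? ?]]]; m2g.
- case: (Rle_dec d b) => Hdb.
  + case: (Rle_dec a d) => Had.
    * exists d; split; first tauto.
      split; case: H1 => [[? ?]|[[? ?]|[? ?]]]; case: H2 => [[? ?]|[[? ?]|[? ?]]]; m2g.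
    * exists a; split; first tauto.
      split; case: H1 => [[? ?]|[[? ?]|[? ?]]]; case: H2 => [[? ?]|[[? ?]|[? ?]]]; m2g.
  + exists b; split; first tauto.
    split; case: H1 => [[? ?]|[[? ?]|[? ?]]]; case: H2 => [[? ?]|[[? ?]|[? ?]]]; m2g.
- exists b; split; first tauto.
  split; case: H1 => [[? ?]|[[? ?]|[? ?]]]; case: H2 => [[? ?]|[[? ?]|[? ?]]]; m2g.
Qed.

Lemma odot_M2 f g w : Hsub f -> Hsub g ->
  (odot f g w <-> Hsub w /\ M2 (E (f 'X)) (E (g 'X)) (E (w 'X))).
Proof. move=> Hf Hg; rewrite odot_char // thadd_E; tauto. Qed.

Lemma M2_0l b c : (0 <= b)%Re -> (0 <= c)%Re -> M2 0 b c -> c = b.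
Proof. move=> ? ? [[? ?]|[[? ?]|[? ?]]]; lra. Qed.
Lemma M2_0r a b : (0 <= a)%Re -> (0 <= b)%Re -> M2 a b 0 -> a = b.
Proof. move=> ? ? [[? ?]|[[? ?]|[? ?]]]; lra. Qed.

Lemma is_hg : is_hypergroup Hsub odot.
Proof.
have [e [He HeX]] : exists e, Hsub e /\ e 'X = None.
  apply: surj; rewrite /Tneg tlt_E E_Some0 /=; lra.
have Ee : E (e 'X) = 0%Re by rewrite HeX.
have inv_eq : forall x y', Hsub x -> hinverse Hsub odot e x y' -> y' = x.
  move=> x y' Hx [Hy' [H1 _]].
  move/(odot_M2 _ Hx Hy'): H1 => [_]; rewrite Ee => /M2_0r H.
  apply: (Hsub_inj Hy' Hx); apply: E_inj; symmetry; apply: H; exact: E_ge0.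
split; first by move=> x y z Hx Hy H; case: (odot_fwd Hx Hy H).
split.
  move=> x y z Hx Hy Hz w; split.
  - move=> [u [Hxy Huz]].
    have Hu := proj1 (odot_fwd Hx Hy Hxy).
    move/(odot_M2 _ Hx Hy): Hxy => [_ H1].
    move/(odot_M2 _ Hu Hz): Huz => [Hw H2].
    have [v [Hv [H3 H4]]] := assoc_R H1 H2.
    have [h [Hh Ehv]] : exists h, Hsub h /\ E (h 'X) = v.
      case: Hv => [->|[->|[->|->]]]; by eauto.
    exists h; split; [apply/(odot_M2 _ Hy Hz) | apply/(odot_M2 _ Hx Hh)]; rewrite Ehv //.
  - move=> [v [Hyz Hxv]].
    have Hv := proj1 (odot_fwd Hy Hz Hyz).
    move/(odot_M2 _ Hy Hz): Hyz => [_ H1].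
    move/(odot_M2 _ Hx Hv): Hxv => [Hw H2].
    have [u [Hu [H3 H4]]] := assoc_R (M2_12 H1) (M2_12 H2).
    have [h [Hh Ehu]] : exists h, Hsub h /\ E (h 'X) = u.
      case: Hu => [->|[->|[->|->]]]; by eauto.
    exists h; split; [apply/(odot_M2 _ Hx Hy) | apply/(odot_M2 _ Hh Hz)]; rewrite Ehu;
      split => //; exact: M2_12.
exists e; split.
  split => // x Hx; split => w.
  - rewrite odot_M2 // Ee; split.
    + move=> [Hw H]; apply: (Hsub_inj Hw Hx); apply: E_inj.
      apply: (M2_0l _ _ H); exact: E_ge0.
    + move=> ->; split => //; right; right; split => //; exact: E_ge0.
  - rewrite odot_M2 // Ee; split.
    + move=> [Hw H]; apply: (Hsub_inj Hw Hx); apply: E_inj.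
      apply: (M2_0l _ _ (M2_12 H)); exact: E_ge0.
    + move=> ->; split => //; right; left; split => //; exact: E_ge0.
split.
  move=> e' [He' Hid].
  have [H _] := Hid e' He'.
  symmetry; apply/(H e); apply/odot_M2 => //; split => //.
  rewrite Ee; left; split => //; exact: E_ge0.
split.
  move=> x Hx; exists x; split; last by move=> y' Hy'; exact: inv_eq Hx Hy'.
  have Hxx : odot x x e.
    apply/odot_M2 => //; split => //; rewrite Ee; left; split => //; exact: E_ge0.
  by split.
move=> x y z y' z' Hx Hy Hz Hiy Hiz Hyzx.
rewrite (inv_eq _ _ Hy Hiy) (inv_eq _ _ Hz Hiz).
move/(odot_M2 _ Hy Hz): Hyzx => [_ H].
split; apply/odot_M2 => //; split => //.
- exact: M2_23 (M2_12 (M2_23 H)).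
- exact: M2_23.
Qed.

Theorem proposition5p28 :
  hclosed Hsub odot /\
  is_hypergroup Hsub odot /\
  (forall h, Hsub h -> Tneg (h 'X)) /\
  (forall f g, Hsub f -> Hsub g -> f 'X = g 'X -> f = g) /\
  (forall a, Tneg a -> exists h, Hsub h /\ h 'X = a) /\
  (forall f g, Hsub f -> Hsub g ->
     forall a, (exists w, odot f g w /\ w 'X = a) <-> thadd (f 'X) (g 'X) a).
Proof.
split; first by move=> x y z Hx Hy H; case: (odot_fwd Hx Hy H).
split; first exact: is_hg.
split; first by move=> h [].
split; first exact: Hsub_inj.
split; first exact: surj.
move=> f g Hf Hg a; split.
- by move=> [w [Hw <-]]; case: (odot_fwd Hf Hg Hw).
- exact: odot_bwd.
Qed.
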